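(* Let $x \in \mathcal{O}_s \cup \mathcal{O}_t$ with $x \neq 1$, and let $\lambda = \left(x^{q-1} + x^{-(q-1)}\right)^{q-1}$. Then $$x^{q+1} + \sqrt{(\lambda^{\sqrt{2q}}+1)\lambda}\; x + \lambda^{\sqrt{2q}/2} = 0,$$ where $\sqrt{y}$ denotes the unique square root of $y$ in $E$.
   Context: Let $q = 2^m$ with $m \ge 3$ odd, so that $\sqrt{2q} = 2^{(m+1)/2}$ is an integer and $\sqrt{2q}/2 = 2^{(m-1)/2}$. Let $E = \mathbb{F}_{q^4}$. Put $s = q - \sqrt{2q} + 1$ and $t = q + \sqrt{2q} + 1$. Define $\mathcal{O}_s = \{x \in E \mid x^s = 1\}$ and $\mathcal{O}_t = \{x \in E \mid x^t = 1\}$. *)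

(* Defs.v *)
From mathcomp Require Import all_boot all_order all_algebra all_field.
Set Implicit Arguments. Unset Strict Implicit. Unset Printing Implicit Defensive.

Definition qq (m : nat) : nat := 2 ^ m.
(* sqrt(2q) = 2^((m+1)/2)  (an integer when m is odd) *)
Definition sqrt2q (m : nat) : nat := 2 ^ ((m + 1) %/ 2).
Definition half_sqrt2q (m : nat) : nat := 2 ^ ((m - 1) %/ 2).
Definition ss (m : nat) : nat := qq m - sqrt2q m + 1.
Definition tt (m : nat) : nat := qq m + sqrt2q m + 1.

(* Main.v *)
Require Import Defs.
From mathcomp Require Import all_boot all_order all_algebra all_field.
From mathcomp Require Import ring zify.
Import GRing.Theory.
Local Open Scope ring_scope.

Lemma natfacts (m : nat) : (3 <= m)%N -> odd m ->
  [/\ sqrt2q m = (2 * half_sqrt2q m)%N, (sqrt2q m * sqrt2q m = 2 * qq m)%N,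
      (sqrt2q m <= qq m)%N & (ss m * tt m = qq m * qq m + 1)%N].
Proof.
move=> hm hodd.
have hk : ((m + 1) %/ 2 = ((m - 1) %/ 2).+1)%N.
  have := odd_double_half m; rewrite hodd => hm2. lia.
have h1 : sqrt2q m = (2 * half_sqrt2q m)%N by rewrite /sqrt2q /half_sqrt2q hk expnS.
have h2 : (sqrt2q m * sqrt2q m = 2 * qq m)%N.
  rewrite /sqrt2q /qq -expnD -expnS; congr (2 ^ _)%N.
  have := odd_double_half m; rewrite hodd => hm2. lia.
have h3 : (sqrt2q m <= qq m)%N.
  rewrite /sqrt2q /qq leq_exp2l //. lia.
split => //.
rewrite /ss /tt. move: h2 h3; set a := sqrt2q m; set b := qq m => h2 h3. nia.
Qed.

Section F.
Variable E : fieldType.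
Hypothesis ch2 : 2%N \in [pchar E].

Lemma frob k (a b : E) : (a + b) ^+ (2 ^ k) = a ^+ (2 ^ k) + b ^+ (2 ^ k).
Proof.
elim: k => [|k IH]; first by rewrite !expr1.
rewrite expnSr !exprM IH; apply: exprDn_pchar.
by rewrite (eq_pnat _ (pcharf_eq ch2)) pnat_id.
Qed.

Lemma sqrD (a b : E) : (a + b) ^+ 2 = a ^+ 2 + b ^+ 2.
Proof. exact: (frob 1). Qed.

Lemma oppE (a : E) : - a = a.
Proof. exact: oppr_pchar2. Qed.

Lemma two0 : (2 : E) = 0.
Proof. exact: pcharf0 ch2. Qed.

Lemma addeq0 (a b : E) : a + b = 0 -> a = b.
Proof. by move/eqP; rewrite addr_eq0 oppE => /eqP. Qed.

Lemma sq_inj (a b : E) : a ^+ 2 = b ^+ 2 -> a = b.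
Proof.
move=> h; apply: addeq0; apply/eqP; rewrite -sqrf_eq0 sqrD h.
by rewrite -mulr2n -mulr_natl two0 mul0r.
Qed.
End F.
Arguments frob {E}. Arguments sqrD {E}. Arguments oppE {E}. Arguments addeq0 {E}. Arguments sq_inj {E}. Arguments two0 {E}.

Theorem lemma4p2 (m : nat) (E : finFieldType)
  (hm : (3 <= m)%N) (hodd : odd m) (hE : #|E| = (qq m ^ 4)%N)
  (x : E) (hx : x ^+ ss m = 1 \/ x ^+ tt m = 1) (hx1 : x != 1)
  (r : E)
  (hr : let lam := (x ^+ (qq m - 1) + x ^- (qq m - 1)) ^+ (qq m - 1) in
        r ^+ 2 = (lam ^+ sqrt2q m + 1) * lam) :
  let lam := (x ^+ (qq m - 1) + x ^- (qq m - 1)) ^+ (qq m - 1) in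
  x ^+ (qq m + 1) + r * x + lam ^+ half_sqrt2q m = 0.
Proof.
have [hsh hss hsq hst] := natfacts m hm hodd.
have ch2 : 2%N \in [pchar E].
  by apply: (card_finPcharP (n := (m * 4)%N)) => //; rewrite hE /qq -expnM.
have fq a b : (a + b) ^+ qq m = a ^+ qq m + b ^+ qq m := frob ch2 m a b.
have fs a b : (a + b) ^+ sqrt2q m = a ^+ sqrt2q m + b ^+ sqrt2q m
  := frob ch2 _ a b.
move: hr; rewrite /=.
set q := qq m in hE hsq hss hst fq *.
set s := sqrt2q m in hsh hss hsq fs *.
set h := half_sqrt2q m in hsh *.
move=> hr.
have q0 : (0 < q)%N by rewrite /q /qq expn_gt0.
have hq2 : x ^+ (q * q + 1) = 1.
  rewrite -hst; case: hx => hx; first by rewrite exprM hx expr1n.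
  by rewrite mulnC exprM hx expr1n.
have x0 : x != 0.
  by apply: contra_eq_neq hq2 => ->; rewrite expr0n addn1 /= eq_sym oner_eq0.
set X := x in hx hx1 hr hq2 x0 *.
set Q := X ^+ q.
have Q0 : Q != 0 by rewrite expf_neq0.
have QQ : Q ^+ q = X^-1.
  apply: (mulIf x0); rewrite mulVf // /Q -exprM -exprSr -addn1 //.
have QX : Q != X.
  apply: contra_neq hx1 => QX.
  have : X ^+ 2 = 1.
    have e : X^-1 = X by rewrite -QQ {1}QX; exact: QX.
    by rewrite expr2 -{1}e mulVf.
  by move/eqP; rewrite sqrf_eq1 (oppE ch2) orbb => /eqP.
have QX2 : Q ^+ 2 + X ^+ 2 != 0.
  rewrite -(sqrD ch2) sqrf_eq0; apply: contra_neq QX => /(addeq0 ch2) //.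
have X1 : 1 + X ^+ 2 != 0.
  rewrite -[1](expr1n _ 2) -(sqrD ch2) sqrf_eq0; apply: contra_neq hx1.
  by move/(addeq0 ch2) => ->.
have QXn : Q + X != 0 by apply: contra_neq QX => /(addeq0 ch2).
set mu := (1 + X * Q) / (Q + X).
set P := X * (1 + Q ^+ 2) / (Q * (1 + X ^+ 2)).
set S := X ^+ s.
have SS : S ^+ s = Q ^+ 2 by rewrite /S -exprM hss mulnC exprM.
have hP : mu ^+ s = P.
  rewrite /mu expr_div_n fs exprMn expr1n fs -/S.
  set FQ := Q ^+ s.
  case: hx => hx.
  - have hS : S = Q * X.
      rewrite /Q -exprSr -[LHS]mul1r -hx -exprD; congr (_ ^+ _).
      rewrite /ss -/q -/s; lia.
    have S0 : S != 0 by rewrite /S expf_neq0.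
    have hF : FQ = Q / X.
      apply: (mulIf S0); rewrite -exprMn -hS SS hS; field; done.
    rewrite hF hS /P; field.
    by rewrite X1 Q0 x0 /= -mulrA -expr2 -{1}(mulr1 Q) -mulrDr mulf_neq0.
  - have hS : Q * X * S = 1.
      rewrite /Q -exprSr /S -exprD -[RHS]hx; congr (_ ^+ _).
      rewrite /tt -/q -/s; lia.
    have S0 : S != 0 by apply: contra_eq_neq hS => ->; rewrite mulr0 eq_sym oner_eq0.
    have hS' : S = (Q * X)^-1 by apply: (@mulfI _ (Q*X)); rewrite ?mulf_neq0 // hS mulfV // mulf_neq0.
    have hF : FQ = X / Q.
      have := congr1 (fun z => z ^+ s) hS; rewrite !exprMn -/FQ SS expr1n.
      rewrite -/S hS' => e.
      by rewrite -[RHS]mul1r -e; field; rewrite ?Q0 ?x0.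
    rewrite hF hS' /P; field.
    by rewrite X1 Q0 x0.
have hq1 : X ^+ (q - 1) = Q / X.
  by rewrite /Q -{2}(subnK q0) exprD expr1 mulfK.
rewrite hq1.
set w := Q / X + (Q / X)^-1.
have w0 : w != 0.
  have -> : w = (Q ^+ 2 + X ^+ 2) / (X * Q) by rewrite /w; field; rewrite x0 Q0.
  by rewrite mulf_neq0 // invr_neq0 // mulf_neq0.
have hwq : w ^+ q = X^-1 / Q + (X^-1 / Q)^-1.
  by rewrite /w fq !expr_div_n exprVn expr_div_n QQ -/Q.
have hw : w ^+ (q - 1) = w ^+ q / w.
  by rewrite -{2}(subnK q0) exprD expr1 mulfK.
have hlam : w ^+ (q - 1) = mu ^+ 2.
  rewrite hw hwq /mu expr_div_n !(sqrD ch2) exprMn expr1n.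
  rewrite /w; field. by rewrite QX2 x0 Q0 oner_neq0.
have hh : (mu ^+ 2) ^+ h = P by rewrite -exprM -hsh hP.
rewrite hq1 -/w hlam in hr.
have hr2 : r = mu * (P + 1).
  apply: (sq_inj ch2).
  rewrite hr -exprM mulnC exprM hP [in RHS]exprMn (sqrD ch2) expr1n.
  exact: mulrC.
have key : Q * X + P = X * (mu * (P + 1)).
  have : Q * X + P - X * (mu * (P + 1)) = 2 * (X * (Q - X) / (1 + X ^+ 2)).
    rewrite /P /mu; field.
    by rewrite X1 Q0 QXn.
  by rewrite (two0 ch2) mul0r => /eqP; rewrite subr_eq0 => /eqP.
rewrite hlam hh hr2 addn1 exprSr -/Q addrAC key [mu * _ * X]mulrC.
by rewrite -mulr2n -mulr_natl (two0 ch2) mul0r.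
Qed.
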